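(* Let $N>2$ be an odd positive integer with smallest prime factor $p$, and let $K\ge N$ be an integer. Let $a_2,a_1\in\mathbb{Z}_N$ with $\gcd(a_2,N)=1$, and let $f:\mathbb{Z}_N\to\mathbb{Z}_K$ be defined by $f(x)=\phi(a_2x^2+a_1x)$, where $\phi:\mathbb{Z}_N\to\mathbb{Z}_K$ sends the class of $y\in\{0,\dots,N-1\}$ to the class of $y$ modulo $K$. For $0\le k<N$ let $\mathbf{a}_k=(a_k(0),\dots,a_k(K-1))$ with $a_k(t)=\omega_K^{tf(k)}$. Let $\mathbf{h}_0,\dots,\mathbf{h}_{N-1}$ be unimodular complex sequences of length $N$ such that for all $0\le i\ne j<N$ and all $0\le v<N$, $$\Big|\sum_{n=0}^{N-1}h_i(n)h_j^*(n)\Big|\le 1,\qquad \Big|\sum_{n=0}^{N-1}h_i(n)h_j^*(n)\omega_N^{nv}\Big|<N.$$ For $0\le i<N$ define $\mathbf{s}_i$ of length $NK$ by $s_i(tN+k)=h_i(k)a_k(t)$ ($0\le t<K$, $0\le k<N$) and let $\mathcal{S}=\{\mathbf{s}_0,\dots,\mathbf{s}_{N-1}\}$. Then $\mathcal{S}$ is a periodic $(N,NK,\Pi,K)$-LAZ sequence set, where (1) $\Pi=(-p,p)\times(-N,N)$ if $K=N$; (2) $\Pi=(-p,p)\times(-K+N-1,K-N+1)$ if $N<K<2N-1$; (3) $\Pi=(-p,p)\times(-K,K)$ if $K\ge 2N-1$.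
   Context: $\omega_L=e^{2\pi\sqrt{-1}/L}$, $z^*$ is complex conjugation, unimodular means all entries have modulus 1. For sequences $\mathbf{a},\mathbf{b}$ of length $L$, the periodic cross-ambiguity function is $AF_{\mathbf{a},\mathbf{b}}(\tau,v)=\sum_{t=0}^{L-1}a(t)b^*(\langle t+\tau\rangle_L)\omega_L^{vt}$ ($\langle\cdot\rangle_L$ = reduction mod $L$), $AF_{\mathbf{a}}=AF_{\mathbf{a},\mathbf{a}}$. A set of $M$ sequences of length $L$ is an $(M,L,\Pi,\theta)$-LAZ periodic sequence set if $|AF_{\mathbf{a}}(\tau,v)|\le\theta$ for all sequences $\mathbf{a}$ in the set and all integer $(0,0)\ne(\tau,v)\in\Pi$, and $|AF_{\mathbf{a},\mathbf{b}}(\tau,v)|\le\theta$ for all distinct $\mathbf{a},\mathbf{b}$ in the set and all integer $(\tau,v)\in\Pi$. *)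

(* Defs.v *)
From HB Require Import structures.
From mathcomp Require Import all_boot all_order all_algebra.
From mathcomp Require Import complex.
From mathcomp Require Import reals trigo.
Set Implicit Arguments. Unset Strict Implicit. Unset Printing Implicit Defensive.
Import Order.TTheory GRing.Theory Num.Theory.
Local Open Scope ring_scope.
Local Open Scope complex_scope.

Definition expi (R : realType) (x : R) : R[i] := (cos x +i* sin x)%C.

Definition omg (R : realType) (L : nat) (m : int) : R[i] :=
  expi (2 * pi * (m%:~R) / (L%:R)).

Definition AF (R : realType) (L : nat) (a b : nat -> R[i]) (tau v : int) : R[i] :=
  \sum_(t < L) a t * (b (absz ((t%:Z + tau) %% L%:Z)%Z))^* * omg R L (v * t%:Z).

Definition LAZ (R : realType) (M L : nat) (S : nat -> nat -> R[i])
  (Pi : int -> int -> Prop) (theta : R) : Prop :=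
  (forall i, (i < M)%N -> forall tau v, Pi tau v -> (tau, v) <> (0, 0) ->
      `|AF L (S i) (S i) tau v| <= theta%:C) /\
  (forall i j, (i < M)%N -> (j < M)%N -> i <> j -> forall tau v, Pi tau v ->
      `|AF L (S i) (S j) tau v| <= theta%:C).

(* f(x) = phi(a2 x^2 + a1 x) : representative in {0..N-1} reduced mod K *)
Definition fquad (N K a2 a1 x : nat) : nat := ((a2 * x ^ 2 + a1 * x) %% N) %% K.

Definition aseq (R : realType) (N K a2 a1 k : nat) (t : nat) : R[i] :=
  omg R K (t * fquad N K a2 a1 k)%N%:Z.

Definition sseq (R : realType) (N K a2 a1 : nat) (h : nat -> nat -> R[i])
  (i m : nat) : R[i] :=
  h i (m %% N)%N * aseq R N K a2 a1 (m %% N)%N (m %/ N)%N.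

Definition PiReg (N K : nat) (tau v : int) : Prop :=
  `|tau| < (pdiv N)%:Z /\
  (if K == N then `|v| < N%:Z
   else if (K < (2 * N).-1)%N then `|v| < (K - N + 1)%N%:Z
   else `|v| < K%:Z).

(* Main.v *)
Require Import Defs.
From HB Require Import structures.
From mathcomp Require Import all_boot all_order all_algebra.
From mathcomp Require Import complex.
From mathcomp Require Import reals trigo.
From mathcomp Require Import ring lra zify.
Import Order.TTheory GRing.Theory Num.Theory.
Local Open Scope ring_scope.
Local Open Scope complex_scope.

Lemma conjcM (R : realType) (x y : R[i]) : Num.conj (x * y) = Num.conj x * Num.conj y.
Proof. exact: rmorphM. Qed.

Section Omg.
Variable R : realType.

Lemma expiD (x y : R) : expi (x + y) = expi x * expi y.
Proof. rewrite /expi cosD sinD /=; congr Complex; ring. Qed.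

Lemma expi0 : expi (0 : R) = 1.
Proof. by rewrite /expi cos0 sin0. Qed.

Lemma expi2pi : expi (2 * pi : R) = 1.
Proof. by rewrite /expi mulr_natl cos2pi sin2pi. Qed.

Lemma expi2pi_nat (n : nat) : expi (2 * pi * n%:R : R) = 1.
Proof.
elim: n => [|n IH]; first by rewrite mulr0 expi0.
have -> : (2 * pi * n.+1%:R : R) = 2 * pi * n%:R + 2 * pi by rewrite -addn1 natrD; ring.
by rewrite expiD IH expi2pi mulr1.
Qed.

Lemma expiN (x : R) : expi (- x) = (expi x)^-1.
Proof.
have h : expi x * expi (- x) = 1 by rewrite -expiD subrr expi0.
have hx : expi x != 0 by apply/eqP => e; move: h; rewrite e mul0r => /eqP; rewrite eq_sym oner_eq0.
by rewrite -[expi (-x)]mul1r -(mulVf hx) -mulrA h mulr1.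
Qed.

Lemma expi2pi_int (q : int) : expi (2 * pi * q%:~R : R) = 1.
Proof.
case: q => n; first by rewrite expi2pi_nat.
by rewrite NegzE intrN mulrN expiN -pmulrn expi2pi_nat invr1.
Qed.

Lemma norm_expi (x : R) : `|expi x| = 1.
Proof. by rewrite normc_def /= cos2Dsin2 sqrtr1. Qed.

Lemma conj_expi (x : R) : Num.conj (expi x) = expi (- x).
Proof. by rewrite /expi cosN sinN. Qed.

Lemma omgD L (a b : int) : omg R L (a + b) = omg R L a * omg R L b.
Proof. by rewrite /omg -expiD intrD !mulrDr mulrDl. Qed.

Lemma omg0 L : omg R L 0 = 1.
Proof. by rewrite /omg mulr0 mul0r expi0. Qed.

Lemma omg_mulL L (q : int) : (0 < L)%N -> omg R L (L%:Z * q) = 1.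
Proof.
move=> L0; rewrite /omg intrM -(expi2pi_int q); congr expi.
have : (L%:R : R) != 0 by rewrite pnatr_eq0 -lt0n.
move=> ?; rewrite pmulrn. field. by rewrite pnatr_eq0 -lt0n.
Qed.

Lemma omg_per L (a q : int) : (0 < L)%N -> omg R L (a + L%:Z * q) = omg R L a.
Proof. by move=> L0; rewrite omgD omg_mulL // mulr1. Qed.

Lemma omg_scale N K (x : int) : (0 < N)%N -> (0 < K)%N ->
  omg R (N * K) (N%:Z * x) = omg R K x.
Proof.
move=> N0 K0; rewrite /omg; congr expi.
have : (N%:R : R) != 0 by rewrite pnatr_eq0 -lt0n.
have : (K%:R : R) != 0 by rewrite pnatr_eq0 -lt0n.
rewrite intrM natrM pmulrn => ? ?; field; apply/andP; split => //.
Qed.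

Lemma norm_omg L m : `|omg R L m| = 1.
Proof. exact: norm_expi. Qed.

Lemma conj_omg L m : Num.conj (omg R L m) = omg R L (- m).
Proof. by rewrite /omg conj_expi intrN mulrN mulNr. Qed.


Lemma omgX L (n : nat) (e : int) : omg R L (n%:Z * e) = omg R L e ^+ n.
Proof.
elim: n => [|n IH]; first by rewrite mul0r omg0 expr0.
by rewrite intS mulrDl mul1r omgD IH exprS.
Qed.

Definition G K (e : int) := \sum_(t < K) omg R K (t%:Z * e).

Lemma G_dvd K e : (0 < K)%N -> (K%:Z %| e)%Z -> G K e = K%:R.
Proof.
move=> K0 /divzK <-; rewrite /G (eq_bigr (fun _ => 1)); last first.
  by move=> t _; rewrite mulrA mulrC omg_mulL.
by rewrite sumr_const card_ord.
Qed.

Lemma expi_ne1 (x : R) : 0 < x < 2 * pi -> expi x != 1.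
Proof.
case/andP => x0 x2; apply/eqP => /(congr1 (@complex.Re R)) /= c1.
have y0 : 0 < x / 2 < pi.
  by apply/andP; split; [rewrite divr_gt0 // | rewrite ltr_pdivrMr // mulrC].
have := sin_gt0_pi y0.
have : cos x = cos ((x / 2) *+ 2) by congr cos; rewrite -mulr_natr mulfVK // pnatr_eq0.
rewrite cos_mulr2n cos2sin2 c1 => h hs.
have : sin (x/2) ^+ 2 = 0 by move: h; lra.
by move/eqP; rewrite expf_eq0 /= => /eqP e; move: hs; rewrite e ltxx.
Qed.

Lemma G_ndvd K e : (0 < K)%N -> ~~ (K%:Z %| e)%Z -> G K e = 0.
Proof.
move=> K0 nd.
set w := omg R K e.
have wK : w ^+ K = 1 by rewrite /w -omgX omg_mulL.
have Gw : G K e = \sum_(i < K) w ^+ i by apply: eq_bigr => i _; rewrite omgX.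
have w1 : w != 1.
  rewrite /w (divz_eq e K) addrC mulrC omg_per //.
  set r := (e %% K)%Z.
  have r0 : 0 <= r by rewrite modz_ge0 // -lt0n.
  have rK : r < K by rewrite ltz_pmod.
  have rn0 : r != 0.
    by apply: contraNneq nd => r0'; apply/dvdz_mod0P.
  rewrite /omg; apply: expi_ne1.
  have Kp : (0 : R) < K%:R by rewrite ltr0n.
  have rp : (0 : R) < r%:~R by rewrite ltr0z lt_def rn0 r0.
  have rlt : (r%:~R : R) < (K%:Z)%:~R by rewrite ltr_int.
  apply/andP; split; first by rewrite divr_gt0 // !mulr_gt0 // pi_gt0.
  rewrite ltr_pdivrMr // ltr_pM2l ?mulr_gt0 ?pi_gt0 //.
have := subrX1 w K; rewrite wK subrr -Gw => /esym /eqP.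
by rewrite mulf_eq0 subr_eq0 (negbTE w1) /= => /eqP.
Qed.

End Omg.

Lemma sum_reindex (V : nmodType) N K (F : nat -> V) :
  \sum_(m < N * K) F m = \sum_(k < N) \sum_(t < K) F (t * N + k)%N.
Proof.
elim: K => [|K IH].
  by rewrite muln0 big_ord0 big1 // => k _; rewrite big_ord0.
rewrite (eq_bigr (fun k : 'I_N => \sum_(t < K) F (t * N + k)%N + F (K * N + k)%N)); last first.
  by move=> k _; rewrite big_ord_recr.
rewrite big_split /= -IH -!(big_mkord xpredT F) -(big_mkord xpredT (fun k => F (K * N + k)%N)).
rewrite (big_cat_nat _ (n := N * K)) //=; last by rewrite leq_pmul2l ?leqnSn // ltnS leq0n || rewrite leq_mul2l leqnSn orbT.
congr (_ + _).
rewrite mulnS addnC -{1}[(N * K)%N]add0n big_addn addKn; apply: eq_bigr => i _; congr F; rewrite mulnC addnC //.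
Qed.

Section Decomp.
Variables (R : realType) (N K a2 a1 : nat) (h : nat -> nat -> R[i]).
Hypotheses (N0 : (0 < N)%N) (K0 : (0 < K)%N).

Definition fz k : int := (fquad N K a2 a1 k)%:Z.
Definition kp (tau : int) k : nat := absz ((k%:Z + tau) %% N%:Z)%Z.
Definition dl (tau : int) k : int := ((k%:Z + tau) %/ N%:Z)%Z.
Definition Cc i j tau v k := h i k * (h j (kp tau k))^* *
   omg R K (- (dl tau k * fz (kp tau k))) * omg R (N * K) (v * k%:Z).
Definition ee tau v k := fz k - fz (kp tau k) + v.

Lemma term_eq i j tau v k t : (k < N)%N -> (t < K)%N ->
  sseq N K a2 a1 h i (t * N + k)%N *
  (sseq N K a2 a1 h j (absz (((t * N + k)%N%:Z + tau) %% (N * K)%N%:Z)%Z))^* *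
  omg R (N * K) (v * (t * N + k)%N%:Z)
  = Cc i j tau v k * omg R K (t%:Z * ee tau v k).
Proof.
move=> kN tK.
set m := (t * N + k)%N.
have mN : (m %% N = k)%N by rewrite /m modnMDl modn_small.
have mD : (m %/ N = t)%N by rewrite /m divnMDl // divn_small // addn0.
have Nz : N%:Z != 0 by rewrite -lt0n.
have NKz : (N * K)%N%:Z != 0 by rewrite -lt0n muln_gt0 N0.
set q := ((m%:Z + tau) %/ (N * K)%N%:Z)%Z.
set M := ((m%:Z + tau) %% (N * K)%N%:Z)%Z.
have M0 : 0 <= M by rewrite modz_ge0.
have ME : M = (t%:Z - q * K%:Z) * N%:Z + (k%:Z + tau).
  have := divz_eq (m%:Z + tau) (N * K)%N%:Z; rewrite -/q -/M /m => E.
  apply: (@addrI _ (q * (N * K)%N%:Z)); rewrite -E PoszD PoszM PoszM; ring.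
set m' := absz M.
have m'M : m'%:Z = M by rewrite /m' gez0_abs.
have m'N : (m' %% N)%N = kp tau k.
  apply/eqP; rewrite -eqz_nat -modz_nat m'M ME modzMDl /kp gez0_abs ?modz_ge0 //.
have m'D : (m' %/ N)%N%:Z = t%:Z - q * K%:Z + dl tau k.
  by rewrite -divz_nat m'M ME divzMDl.
rewrite /sseq mN mD m'N /aseq.
rewrite !PoszM m'D -/(fz k) -/(fz (kp tau k)).
have -> : (t%:Z - q * K%:Z + dl tau k) * fz (kp tau k) =
   (t%:Z + dl tau k) * fz (kp tau k) + K%:Z * (- (q * fz (kp tau k))) by ring.
rewrite omg_per // conjcM conj_omg.
have -> : v * m%:Z = N%:Z * (v * t%:Z) + v * k%:Z by rewrite /m PoszD PoszM; ring.
rewrite omgD omg_scale // /Cc /ee.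
set A := omg R K (t%:Z * fz k).
set B := omg R K (- ((t%:Z + dl tau k) * fz (kp tau k))).
set C := omg R K (v * t%:Z).
set E := omg R K (- (dl tau k * fz (kp tau k))).
set F := omg R K (t%:Z * (fz k - fz (kp tau k) + v)).
have key : E * F = A * B * C by rewrite /A /B /C /E /F -!omgD; congr omg; ring.
transitivity (h i k * (h j (kp tau k))^* * omg R (N * K) (v * k%:Z) * (A * B * C)); first by ring.
by rewrite -key; ring.
Qed.

Lemma AF_decomp i j tau v :
  AF (N * K) (sseq N K a2 a1 h i) (sseq N K a2 a1 h j) tau v =
  \sum_(k < N) Cc i j tau v k * G R K (ee tau v k).
Proof.
rewrite /AF (@sum_reindex _ N K (fun m => sseq N K a2 a1 h i m *
  Num.conj (sseq N K a2 a1 h j (absz ((m%:Z + tau) %% (N * K)%N%:Z)%Z)) *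
  omg R (N * K) (v * m%:Z))).
apply: eq_bigr => k _; rewrite /G mulr_sumr; apply: eq_bigr => t _.
exact: term_eq.
Qed.
End Decomp.

Lemma small_dvd0 (K : nat) (x : int) : (K%:Z %| x)%Z -> `|x| < K%:Z -> x = 0.
Proof.
rewrite dvdzE /= -abszE ltz_nat => H lt.
apply/eqP; rewrite -absz_eq0; apply/eqP.
case: (posnP `|x|%N) => // p; move: (dvdn_leq p H); lia.
Qed.

Lemma coprime_small (N t : nat) : (0 < t)%N -> (t < pdiv N)%N -> coprime N t.
Proof.
move=> t0 tp; rewrite /coprime; apply/eqP.
have g0 : (0 < gcdn N t)%N by rewrite gcdn_gt0 t0 orbT.
case: (ltngtP (gcdn N t) 1) => // g1; first lia.
have := pdiv_min_dvd g1 (dvdn_gcdl N t).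
have := dvdn_leq t0 (dvdn_gcdr N t). lia.
Qed.

Definition fz' (N K a2 a1 : nat) k : int := (fquad N K a2 a1 k)%:Z.

Lemma fzE (N K a2 a1 k : nat) : (N <= K)%N -> (0 < N)%N ->
  fz' N K a2 a1 k = ((a2%:Z * k%:Z * k%:Z + a1%:Z * k%:Z) %% N%:Z)%Z.
Proof.
move=> NK N0; rewrite /fz' /fquad modn_small; last by apply: leq_trans NK; rewrite ltn_pmod.
by rewrite -modz_nat -mulnn PoszD !PoszM mulrA.
Qed.

Lemma fz_bound (N K a2 a1 k : nat) : (N <= K)%N -> (0 < N)%N ->
  0 <= fz' N K a2 a1 k < N%:Z.
Proof.
move=> NK N0; rewrite fzE // modz_ge0 ?ltz_pmod //; lia.
Qed.

Definition kp' (N : nat) (tau : int) k : nat := absz ((k%:Z + tau) %% N%:Z)%Z.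
Definition dl' (N : nat) (tau : int) k : int := ((k%:Z + tau) %/ N%:Z)%Z.
Definition ee' N K a2 a1 tau v k := fz' N K a2 a1 k - fz' N K a2 a1 (kp' N tau k) + v.

Lemma alg_id (a2 a1 t k1 k2 c1 c2 Q1 Q2 P1 P2 N : int) :
  let F x := a2 * x * x + a1 * x in
  (F k1 - Q1 * N) - (F (k1 + t - c1 * N) - P1 * N)
  - ((F k2 - Q2 * N) - (F (k2 + t - c2 * N) - P2 * N)) =
  2 * a2 * t * (k2 - k1) +
  N * ((a2 * (2 * t * c1 + 2 * k1 * c1 - c1 * c1 * N) + a1 * c1 - Q1 + P1)
      - (a2 * (2 * t * c2 + 2 * k2 * c2 - c2 * c2 * N) + a1 * c2 - Q2 + P2)).
Proof. move=> F; rewrite /F; ring. Qed.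

Lemma fz_decomp (N K a2 a1 : nat) (x : nat) : (N <= K)%N -> (0 < N)%N ->
  fz' N K a2 a1 x = (a2%:Z * x%:Z * x%:Z + a1%:Z * x%:Z)
     - ((a2%:Z * x%:Z * x%:Z + a1%:Z * x%:Z) %/ N%:Z)%Z * N%:Z.
Proof.
by move=> NK N0; rewrite fzE.
Qed.

Lemma kp_decomp N tau k : (0 < N)%N ->
  (kp' N tau k)%:Z = k%:Z + tau - dl' N tau k * N%:Z.
Proof.
by move=> N0; rewrite /kp' /dl' gez0_abs ?modz_ge0 -?lt0n.
Qed.

Lemma uniq_k N K a2 a1 tau v k1 k2 :
  odd N -> (2 < N)%N -> (N <= K)%N -> coprime a2 N -> tau != 0 ->
  PiReg N K tau v -> (k1 < N)%N -> (k2 < N)%N ->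
  (K%:Z %| ee' N K a2 a1 tau v k1)%Z -> (K%:Z %| ee' N K a2 a1 tau v k2)%Z ->
  k1 = k2.
Proof.
move=> oN N2 NK cop t0 [tp vb] k1N k2N H1 H2.
have N0 : (0 < N)%N by lia.
set f1 := fz' N K a2 a1 k1; set g1 := fz' N K a2 a1 (kp' N tau k1).
set f2 := fz' N K a2 a1 k2; set g2 := fz' N K a2 a1 (kp' N tau k2).
have := fz_bound N K a2 a1 k1 NK N0; have := fz_bound N K a2 a1 k2 NK N0.
have := fz_bound N K a2 a1 (kp' N tau k1) NK N0; have := fz_bound N K a2 a1 (kp' N tau k2) NK N0.
rewrite -/f1 -/f2 -/g1 -/g2 => bg2 bg1 bf2 bf1.
have D : (N%:Z %| (f1 - g1) - (f2 - g2))%Z.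
  have E : (f1 - g1) - (f2 - g2) = ee' N K a2 a1 tau v k1 - ee' N K a2 a1 tau v k2.
    by rewrite /ee' -/f1 -/f2 -/g1 -/g2; ring.
  move: vb; case: eqP => [KN|KN] vb.
    have HK : K%:Z = N%:Z by rewrite KN.
    by rewrite E; rewrite HK in H1 H2; apply: rpredB.
  case: ifP vb => Klt vb.
    have e1 : ee' N K a2 a1 tau v k1 = 0.
      apply: (@small_dvd0 _ _ H1); rewrite /ee' -/f1 -/g1; lia.
    have e2 : ee' N K a2 a1 tau v k2 = 0.
      apply: (@small_dvd0 _ _ H2); rewrite /ee' -/f2 -/g2; lia.
    by rewrite E e1 e2 subrr dvdz0.
  have : (f1 - g1) - (f2 - g2) = 0.
    apply: (@small_dvd0 K); first by rewrite E; apply: rpredB.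
    move/negbT: Klt; rewrite -leqNgt => Klt; lia.
  by move=> ->; rewrite dvdz0.
set F := fun x : nat => a2%:Z * x%:Z * x%:Z + a1%:Z * x%:Z.
have A := alg_id (a2%:Z) (a1%:Z) tau (k1%:Z) (k2%:Z) (dl' N tau k1) (dl' N tau k2)
  ((F k1) %/ N%:Z)%Z ((F k2) %/ N%:Z)%Z ((F (kp' N tau k1)) %/ N%:Z)%Z
  ((F (kp' N tau k2)) %/ N%:Z)%Z (N%:Z).
rewrite /= -(kp_decomp N tau k1 N0) -(kp_decomp N tau k2 N0) in A.
rewrite /F -(fz_decomp N K a2 a1 k1 NK N0) -(fz_decomp N K a2 a1 k2 NK N0) -(fz_decomp N K a2 a1 (kp' N tau k1) NK N0) -(fz_decomp N K a2 a1 (kp' N tau k2) NK N0) -/f1 -/f2 -/g1 -/g2 in A.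
rewrite A in D.
set W := (X in N%:Z * X) in D.
have D2 : (N%:Z %| 2 * a2%:Z * tau * (k2%:Z - k1%:Z))%Z.
  have -> : 2 * a2%:Z * tau * (k2%:Z - k1%:Z) =
    (2 * a2%:Z * tau * (k2%:Z - k1%:Z) + N%:Z * W) - N%:Z * W by ring.
  by apply: rpredB => //; apply: dvdz_mulr; apply: dvdzz.
have D3 : (N%:Z %| k2%:Z - k1%:Z)%Z.
  move: D2; rewrite !dvdzE !abszM /= Gauss_dvdr //.
  rewrite !coprimeMr coprimen2 oN coprime_sym cop /=.
  apply: coprime_small; first by rewrite absz_gt0.
  by rewrite -ltz_nat abszE.
have lt : `|k2%:Z - k1%:Z| < N%:Z by clear -k1N k2N; lia.
by move: (@small_dvd0 N _ D3 lt) => /eqP; rewrite subr_eq0 eqz_nat => /eqP.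
Qed.

Lemma kp_lt N tau k : (0 < N)%N -> (kp N tau k < N)%N.
Proof.
move=> N0; rewrite -ltz_nat /kp gez0_abs ?modz_ge0 -?lt0n //.
by rewrite ltz_pmod // ltz_nat.
Qed.

Lemma kp0 N k : (k < N)%N -> kp N 0 k = k.
Proof. by move=> kN; rewrite /kp addr0 modz_small //; apply/andP; split => //; rewrite ltz_nat. Qed.

Lemma cplxK (R : realType) (K : nat) : ((K%:R : R)%:C : R[i]) = K%:R.
Proof. exact: (rmorph_nat (real_complex R) K). Qed.

Theorem corollary1 (R : realType) (N K a2 a1 : nat) (h : nat -> nat -> R[i]) :
  odd N -> (2 < N)%N -> (N <= K)%N ->
  (a2 < N)%N -> (a1 < N)%N -> coprime a2 N ->
  (forall i n, (i < N)%N -> (n < N)%N -> `|h i n| = 1) ->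
  (forall i j, (i < N)%N -> (j < N)%N -> i <> j ->
     `|\sum_(n < N) h i n * (h j n)^*| <= 1) ->
  (forall i j v, (i < N)%N -> (j < N)%N -> i <> j -> (v < N)%N ->
     `|\sum_(n < N) h i n * (h j n)^* * omg R N (n * v)%N%:Z| < N%:R) ->
  LAZ N (N * K) (sseq N K a2 a1 h) (PiReg N K) K%:R.
Proof.
move=> oN N2 NK a2N a1N cop hu hc1 hc2.
have N0 : (0 < N)%N by lia.
have K0 : (0 < K)%N by lia.
have vK : forall tau v, PiReg N K tau v -> `|v| < K%:Z.
  move=> tau v [_]; case: eqP => [->|KN] //.
  case: ifP => _ vb; lia.
have key : forall i j, (i < N)%N -> (j < N)%N -> forall tau v, PiReg N K tau v ->
    (tau != 0) || (v != 0) -> `|AF (N * K) (sseq N K a2 a1 h i) (sseq N K a2 a1 h j) tau v| <= (K%:R : R)%:C.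
  move=> i j iN jN tau v P nz.
  rewrite (@AF_decomp R N K a2 a1 h N0 K0) cplxK.
  case: (pickP (fun k : 'I_N => (K%:Z %| ee N K a2 a1 tau v k)%Z)) => [k0 Hk0 | none]; last first.
    rewrite big1 ?normr0 ?ler0n // => k _.
    by rewrite G_ndvd ?mulr0 // none.
  have t0 : tau != 0.
    apply/negP => /eqP t0; move: Hk0 nz; rewrite t0 eqxx /= /ee kp0 // subrr add0r => Hv nz.
    by have := @small_dvd0 K _ Hv (vK _ _ P); move/eqP: nz.
  rewrite (bigD1 k0) //= big1 ?addr0; last first.
    move=> k nk; rewrite G_ndvd ?mulr0 //; apply/negP => Hk.
    have := @uniq_k N K a2 a1 tau v k k0 oN N2 NK cop t0 P (ltn_ord k) (ltn_ord k0) Hk Hk0.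
    by move/val_inj => e; move: nk; rewrite e eqxx.
  rewrite G_dvd // normrM /Cc !normrM norm_conjC !norm_omg (hu _ _ iN (ltn_ord k0)) (hu _ _ jN (kp_lt N tau k0 N0)).
  by rewrite !mul1r normr_nat.
split.
  move=> i iN tau v P nz; apply: key => //.
  by case: (tau =P 0) => [t0|//]; case: (v =P 0) => [v0|//]; move: nz; rewrite t0 v0.
move=> i j iN jN ij tau v P.
case: (tau =P 0) => [t0|t0]; last by apply: key => //; apply/orP; left; apply/eqP.
case: (v =P 0) => [v0|v0]; last by apply: key => //; apply/orP; right; apply/eqP.
rewrite t0 v0 (@AF_decomp R N K a2 a1 h N0 K0) cplxK.
rewrite (eq_bigr (fun k : 'I_N => h i k * (h j k)^* * K%:R)); last first.
  move=> k _; rewrite /Cc /ee kp0 // subrr add0r G_dvd ?dvdz0 //.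
  have kN := ltn_ord k.
  have dl0 : dl N 0 k = 0.
    rewrite /dl addr0 divz_small //; apply/andP; split => //; lia.
  rewrite dl0 !mul0r oppr0 !omg0 !mulr1. Show. by [].
rewrite -mulr_suml normrM normr_nat.
by rewrite -{2}[K%:R]mul1r ler_wpM2r ?ler0n // hc1.
Qed.
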